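(* Under the standing setting below, let $\alpha>0$, $C_0>0$, let $(x_0,y_0)$ satisfy $h(x_0,y_0)\le\alpha^2C_0$, take $\rho(x,y)=\|\nabla h(x,y)\|\,h(x_0,y_0)^{1/2}$, fix an integer $K\ge1$ and $\gamma=\min\{K^{-2/3},1/L_f\}$, and run the Algorithm. Define $B_\Delta=2C_f+\alpha^2\sqrt{C_0}$. Then $$\frac1K\sum_{k=0}^{K-1}\big(\|\Delta_k^x\|^2+\|\Delta_k^y\|^2\big)\le\frac{2(f_0-\bar f)}{\gamma K}+\alpha^2(B_\Delta^2+C_0),$$ and $$\frac1K\sum_{k=0}^{K-1}h_k\le\alpha^2C_0+\frac{\gamma^2L_hB_\Delta^2}{2}\cdot\frac{K-1}{2},$$ where $f_0=f(x_0,y_0)$.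
   Context: Standing setting. $f,g:\mathbb{R}^n\times\mathbb{R}^m\to\mathbb{R}$. $f$ is continuously differentiable, $\bar f:=\inf f>-\infty$, $\nabla f$ is $L_f$-Lipschitz, and $\|\nabla f\|\le C_f$ everywhere. $g$ is twice continuously differentiable, and $h(x,y):=\|\nabla_y g(x,y)\|^2$ is continuously differentiable with $\nabla h$ being $L_h$-Lipschitz ($L_h>0$). Write $\nabla h=(\nabla_x h,\nabla_y h)$, $f_k=f(x_k,y_k)$, $h_k=h(x_k,y_k)$, $\nabla f_k=\nabla f(x_k,y_k)$, $\nabla h_k=\nabla h(x_k,y_k)$, etc. Given $\rho\ge0$, $\alpha,\gamma>0$, $(x_0,y_0)$, the Algorithm iterates for $k\ge0$: $\lambda_k=\big[-\nabla_x h_k^\top\nabla_x f_k-\nabla_y h_k^\top\nabla_y f_k+\alpha\rho(x_k,y_k)\big]_+/(\|\nabla_x h_k\|^2+\|\nabla_y h_k\|^2)$ if $\nabla h_k\ne0$, $\lambda_k=0$ otherwise ($[t]_+=\max\{0,t\}$); $\Delta_k^x=-\nabla_x f_k-\lambda_k\nabla_x h_k$, $\Delta_k^y=-\nabla_y f_k-\lambda_k\nabla_y h_k$; $x_{k+1}=x_k+\gamma\Delta_k^x$, $y_{k+1}=y_k+\gamma\Delta_k^y$. *)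

(* Defs.v *)
From HB Require Import structures.
From mathcomp Require Import all_boot all_order all_algebra.
From mathcomp Require Import all_classical all_reals all_analysis.
Set Implicit Arguments. Unset Strict Implicit. Unset Printing Implicit Defensive.
Import Order.TTheory GRing.Theory Num.Theory.
Import numFieldNormedType.Exports.
Local Open Scope ring_scope.
Local Open Scope classical_set_scope.

Section Defs.
Variables (R : realType) (n m : nat).

Definition pt := ('rV[R]_n * 'rV[R]_m)%type.

Definition dotv (k : nat) (u v : 'rV[R]_k) : R := \sum_(i < k) u 0 i * v 0 i.
Definition enorm (k : nat) (u : 'rV[R]_k) : R := Num.sqrt (dotv u u).

Definition pnorm (u : 'rV[R]_n) (v : 'rV[R]_m) : R :=
  Num.sqrt (enorm u ^+ 2 + enorm v ^+ 2).

Definition gradx (F : pt -> R) (z : pt) : 'rV[R]_n :=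
  \row_(i < n) derive F z (delta_mx 0 i : 'rV[R]_n, 0 : 'rV[R]_m).
Definition grady (F : pt -> R) (z : pt) : 'rV[R]_m :=
  \row_(j < m) derive F z (0 : 'rV[R]_n, delta_mx 0 j : 'rV[R]_m).

Definition C1 (F : pt -> R) : Prop :=
  (forall z, differentiable F z) /\ continuous (gradx F) /\ continuous (grady F).

Definition C2 (F : pt -> R) : Prop :=
  C1 F /\ (forall i, C1 (fun z => gradx F z 0 i)) /\
  (forall j, C1 (fun z => grady F z 0 j)).

Definition grad_lipschitz (F : pt -> R) (L : R) : Prop :=
  forall z w : pt,
    pnorm (gradx F z - gradx F w) (grady F z - grady F w)
    <= L * pnorm (z.1 - w.1) (z.2 - w.2).

Definition gradnorm (F : pt -> R) (z : pt) : R := pnorm (gradx F z) (grady F z).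

Definition hfun (g : pt -> R) (z : pt) : R := enorm (grady g z) ^+ 2.

Definition finf (f : pt -> R) : R := inf (range f).

Definition lam (f h : pt -> R) (rho : pt -> R) (alpha : R) (z : pt) : R :=
  if (gradx h z == 0) && (grady h z == 0) then 0
  else Num.max 0 (- dotv (gradx h z) (gradx f z) - dotv (grady h z) (grady f z)
                  + alpha * rho z)
       / (enorm (gradx h z) ^+ 2 + enorm (grady h z) ^+ 2).

Definition Dx (f h rho : pt -> R) (alpha : R) (z : pt) : 'rV[R]_n :=
  - gradx f z - lam f h rho alpha z *: gradx h z.
Definition Dy (f h rho : pt -> R) (alpha : R) (z : pt) : 'rV[R]_m :=
  - grady f z - lam f h rho alpha z *: grady h z.

Fixpoint iter_alg (f h rho : pt -> R) (alpha gamma : R) (z0 : pt) (k : nat) : pt :=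
  match k with
  | 0 => z0
  | k'.+1 => let z := iter_alg f h rho alpha gamma z0 k' in
             (z.1 + gamma *: Dx f h rho alpha z, z.2 + gamma *: Dy f h rho alpha z)
  end.

End Defs.

(* Main.v *)
Require Import Defs.
From HB Require Import structures.
From mathcomp Require Import all_boot all_order all_algebra.
From mathcomp Require Import all_classical all_reals all_analysis.
Import Order.TTheory GRing.Theory Num.Theory.
Import numFieldNormedType.Exports.
Local Open Scope ring_scope.
Local Open Scope classical_set_scope.
From mathcomp Require Import ring lra.
Set Implicit Arguments. Unset Strict Implicit. Unset Printing Implicit Defensive.
Section Dot.
Variable R : realType.
Lemma dotvC k (u v : 'rV[R]_k) : dotv u v = dotv v u.
Proof. by rewrite /dotv; apply: eq_bigr => i _; rewrite mulrC. Qed.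
Lemma dotvDl k (a b u : 'rV[R]_k) : dotv (a + b) u = dotv a u + dotv b u.
Proof. by rewrite /dotv -big_split; apply: eq_bigr => i _; rewrite !mxE mulrDl. Qed.
Lemma dotvNl k (a u : 'rV[R]_k) : dotv (- a) u = - dotv a u.
Proof. by rewrite /dotv -sumrN; apply: eq_bigr => i _; rewrite !mxE mulNr. Qed.
Lemma dotvBl k (a b u : 'rV[R]_k) : dotv (a - b) u = dotv a u - dotv b u.
Proof. by rewrite dotvDl dotvNl. Qed.
Lemma dotvZl k c (a u : 'rV[R]_k) : dotv (c *: a) u = c * dotv a u.
Proof. by rewrite /dotv mulr_sumr; apply: eq_bigr => i _; rewrite !mxE mulrA. Qed.
Lemma dotvDr k (a b u : 'rV[R]_k) : dotv u (a + b) = dotv u a + dotv u b.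
Proof. by rewrite dotvC dotvDl !(dotvC u). Qed.
Lemma dotvNr k (a u : 'rV[R]_k) : dotv u (- a) = - dotv u a.
Proof. by rewrite dotvC dotvNl dotvC. Qed.
Lemma dotvZr k c (a u : 'rV[R]_k) : dotv u (c *: a) = c * dotv u a.
Proof. by rewrite dotvC dotvZl dotvC. Qed.
Lemma dotv_ge0 k (u : 'rV[R]_k) : 0 <= dotv u u.
Proof. by rewrite /dotv; apply: sumr_ge0 => i _; rewrite -expr2 sqr_ge0. Qed.
Lemma sqr_enorm k (u : 'rV[R]_k) : enorm u ^+ 2 = dotv u u.
Proof. by rewrite /enorm sqr_sqrtr // dotv_ge0. Qed.

Lemma quad_cs (a b c : R) : 0 <= c -> (forall t, 0 <= a - 2 * t * b + t ^+ 2 * c) ->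
  b ^+ 2 <= a * c.
Proof.
move=> c0; case: (ltrgt0P c) c0 => // [cp|->] _ H.
  have := H (b / c). set t := b / c => Ht.
  have e : t * c = b by rewrite /t divfK // gt_eqF.
  have : 0 <= (a - 2 * t * b + t ^+ 2 * c) * c by rewrite mulr_ge0 // ltW.
  have -> : (a - 2 * t * b + t ^+ 2 * c) * c = a * c - 2 * b * (t * c) + (t * c) ^+ 2.
    by ring.
  rewrite e; lra.
case: (eqVneq b 0) => [->|bn0]; first by rewrite expr0n /= mulr0.
have e : a - 2 * ((a + 1) / (2 * b)) * b + ((a + 1) / (2 * b)) ^+ 2 * 0 = -1.
  by field; rewrite bn0.
have := H ((a + 1) / (2 * b)); rewrite e; lra.
Qed.
End Dot.
Section Pair.
Variables (R : realType) (n m : nat).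
Definition pd (a : 'rV[R]_n) (b : 'rV[R]_m) u v := dotv a u + dotv b v.
Definition Q (a : 'rV[R]_n) (b : 'rV[R]_m) := pd a b a b.
Lemma Q_ge0 a b : 0 <= Q a b.
Proof. by rewrite /Q /pd addr_ge0 // dotv_ge0. Qed.
Lemma pnormE a b : pnorm a b = Num.sqrt (Q a b).
Proof. by rewrite /pnorm !sqr_enorm. Qed.
Lemma cs2 a b u v : pd a b u v ^+ 2 <= Q a b * Q u v.
Proof.
apply: quad_cs; first exact: Q_ge0.
move=> t; have := Q_ge0 (a - t *: u) (b - t *: v).
rewrite /Q /pd !(dotvBl, dotvZl, dotvDr, dotvNr, dotvZr) (dotvC u a) (dotvC v b).
move=> H; apply: le_trans H _; rewrite le_eqVlt; apply/orP; left; apply/eqP; ring.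
Qed.
Lemma cs a b u v : pd a b u v <= Num.sqrt (Q a b) * Num.sqrt (Q u v).
Proof.
rewrite -sqrtrM ?Q_ge0 //; apply: le_trans (ler_norm _) _.
by rewrite -sqrtr_sqr; apply: ler_wsqrtr; apply: cs2.
Qed.
Lemma QZ c a b : Q (c *: a) (c *: b) = c ^+ 2 * Q a b.
Proof. by rewrite /Q /pd !(dotvZl, dotvZr); ring. Qed.
Lemma sqrtQZ c a b : Num.sqrt (Q (c *: a) (c *: b)) = `|c| * Num.sqrt (Q a b).
Proof. by rewrite QZ sqrtrM ?sqr_ge0 // sqrtr_sqr. Qed.
Lemma QN a b : Q (- a) (- b) = Q a b.
Proof. by rewrite /Q /pd !(dotvNl, dotvNr) !opprK. Qed.
Lemma Qtri a b u v : Num.sqrt (Q (a + u) (b + v)) <= Num.sqrt (Q a b) + Num.sqrt (Q u v).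
Proof.
have h1 := sqrtr_ge0 (Q a b); have h2 := sqrtr_ge0 (Q u v).
rewrite -[X in _ <= X]ger0_norm ?addr_ge0 // -sqrtr_sqr; apply: ler_wsqrtr.
have -> : Q (a + u) (b + v) = Q a b + 2 * pd a b u v + Q u v.
  rewrite /Q /pd !(dotvDl, dotvDr) (dotvC u a) (dotvC v b); ring.
have := cs a b u v; rewrite sqrrD !sqr_sqrtr ?Q_ge0 //; lra.
Qed.
End Pair.
Section Der.
Variables (R : realType) (n m : nat).
Lemma pairD (a b : 'rV[R]_n) (c d : 'rV[R]_m) : ((a, c) + (b, d) : pt R n m) = (a + b, c + d).
Proof. by []. Qed.
Lemma pairZ (k : R) (a : 'rV[R]_n) (c : 'rV[R]_m) : k *: ((a, c) : pt R n m) = (k *: a, k *: c).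
Proof. by []. Qed.

Lemma derive_pd (F : pt R n m -> R) (w : pt R n m) u v : differentiable F w ->
  derive F w (u, v) = pd (gradx F w) (grady F w) u v.
Proof.
move=> dF; rewrite deriveE //.
have -> : (u, v) = ((u, 0) + (0, v) : pt R n m) by rewrite pairD addr0 add0r.
rewrite linearD /pd; congr (_ + _).
  rewrite {1}(row_sum_delta u).
  rewrite (@big_morph _ _ (fun x : 'rV[R]_n => 'd F w ((x, 0) : pt R n m)) 0 +%R 0 +%R).
  - rewrite /dotv; apply: eq_bigr => i _.
    rewrite -[X in (_, X)](scaler0 _ (u 0 i)) -pairZ linearZ /= mxE deriveE // mulrC.
    by [].
  - by move=> x y /=; rewrite -linearD pairD addr0.
  - by rewrite -[(0,0)]/(0 : pt R n m) linear0.
rewrite {1}(row_sum_delta v).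
rewrite (@big_morph _ _ (fun x : 'rV[R]_m => 'd F w ((0, x) : pt R n m)) 0 +%R 0 +%R).
- rewrite /dotv; apply: eq_bigr => i _.
  rewrite -[X in (X, _)](scaler0 _ (v 0 i)) -pairZ linearZ /= mxE deriveE // mulrC.
  by [].
- by move=> x y /=; rewrite -linearD pairD addr0.
- by rewrite -[(0,0)]/(0 : pt R n m) linear0.
Qed.
End Der.
Section Desc.
Variables (R : realType) (n m : nat).
Lemma line_der (F : pt R n m -> R) (z d : pt R n m) (t : R) :
  differentiable F (t *: d + z) ->
  is_derive t 1 (fun s : R => F (s *: d + z)) ('D_d F (t *: d + z)).
Proof.
move=> dF.
have E : (fun h : R => h^-1 *: (((fun s : R => F (s *: d + z)) \o shift t) (h *: 1)
             - F (t *: d + z))) =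
         (fun h : R => h^-1 *: ((F \o shift (t *: d + z)) (h *: d) - F (t *: d + z))).
  apply/funext => h /=; congr (_ *: (F _ - _)).
  by rewrite [h%:A]mulr1 scalerDl addrA.
have Hd : derivable (fun s : R => F (s *: d + z)) t 1.
  by rewrite /derivable E; exact: diff_derivable.
apply: is_derive_eq; first exact: derivableP Hd.
by rewrite /derive E.
Qed.
Lemma poly_der (a c t : R) :
  is_derive t 1 (fun s : R => s * a + c * s ^+ 2) (a + c * (2 * t)).
Proof.
apply: is_derive_eq.
rewrite scaler0 add0r [a%:A]mulr1 [t%:A]mulr1.
rewrite -[c *: _]/(c * (t + t)); ring.
Qed.
End Desc.
Section Desc2.
Variables (R : realType) (n m : nat).
Lemma descent (F : pt R n m -> R) (L : R) (z1 : 'rV[R]_n) (z2 : 'rV[R]_m) u v (g : R) :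
  (forall w, differentiable F w) -> grad_lipschitz F L -> 0 <= L -> 0 <= g ->
  F (z1 + g *: u, z2 + g *: v) <=
  F (z1, z2) + g * pd (gradx F (z1, z2)) (grady F (z1, z2)) u v + L * g ^+ 2 / 2 * Q u v.
Proof.
move=> dF LF L0 g0.
set z : pt R n m := (z1, z2); set d : pt R n m := (u, v).
set G0 := pd _ _ u v; set c := L * Q u v / 2.
set phi := fun s : R => F (s *: d + z) - (s * G0 + c * s ^+ 2).
have Dphi : forall t : R, is_derive t 1 phi ('D_d F (t *: d + z) - (G0 + c * (2 * t))).
  move=> t; have := line_der (dF (t *: d + z)); have := poly_der G0 c t.
  move=> H1 H2; rewrite /phi; exact: is_deriveB.
move: g0; case: (ltrgt0P g) => // [gp|->] _; last first.
 by rewrite !scale0r !addr0 mul0r expr0n /= mulr0 mul0r !addr0 mul0r addr0 lexx.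
have key : phi g <= phi 0.
  apply: (ler0_derive1_le_cc (a := 0) (b := g)).
  - by move=> x _; have := Dphi x; case.
  - move=> x; rewrite in_itv /= => /andP [x0 xg].
    have Dx := Dphi x; rewrite derive1E derive_val.
    have -> : x *: d + z = (x *: u + z1, x *: v + z2) by [].
    rewrite derive_pd //.
    set w : pt R n m := (x *: u + z1, x *: v + z2).
    have h1 : pd (gradx F w) (grady F w) u v - G0 =
      pd (gradx F w - gradx F z) (grady F w - grady F z) u v.
      by rewrite /pd /G0 /pd !dotvBl; ring.
    have h2 := cs (gradx F w - gradx F z) (grady F w - grady F z) u v.
    have h3 := LF w z; rewrite !pnormE /= !addrK sqrtQZ ger0_norm ?(ltW x0) // in h3.
    have sq0 := sqrtr_ge0 (Q u v); have sq2 := sqr_sqrtr (Q_ge0 u v).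
    have s1 := sqrtr_ge0 (Q (gradx F w - gradx F z) (grady F w - grady F z)).
    rewrite /c; nra.
  - apply: derivable_within_continuous => x _; have := Dphi x; case => //.
  - by rewrite in_itv /= lexx ltW.
  - by rewrite in_itv /= lexx ltW.
  - exact: ltW.
move: key; rewrite /phi scale0r add0r mul0r expr0n /= mulr0 addr0 subr0.
have -> : g *: d + z = (z1 + g *: u, z2 + g *: v) by rewrite /d /z pairZ pairD !(addrC z1) !(addrC z2).
move=> H; have e : c * g ^+ 2 = L * g ^+ 2 / 2 * Q u v by rewrite /c; ring.
rewrite e in H; lra.
Qed.
End Desc2.
Section Step.
Variables (R : realType) (n m : nat).
Variables (a p : 'rV[R]_n) (b q : 'rV[R]_m) (alpha s Cf lambda : R).
Hypothesis alpha0 : 0 < alpha.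
Hypothesis s0 : 0 <= s.
Hypothesis Cfb : Num.sqrt (Q a b) <= Cf.
Let r := Num.sqrt (Q p q).
Let E := - dotv p a - dotv q b + alpha * (r * s).
Hypothesis lamE : lambda = if (p == 0) && (q == 0) then 0
  else Num.max 0 E / (enorm p ^+ 2 + enorm q ^+ 2).
Let dx := - a - lambda *: p.
Let dy := - b - lambda *: q.

Lemma lam_cases : (Q p q = 0 /\ lambda = 0 /\ (forall x y, pd p q x y = 0))
   \/ (0 < Q p q /\ lambda * Q p q = Num.max 0 E).
Proof.
have QE : enorm p ^+ 2 + enorm q ^+ 2 = Q p q by rewrite !sqr_enorm.
case: (ltrgt0P (Q p q)) (Q_ge0 p q) => // [Qp|Q0] _.
  right; split => //; rewrite lamE.
  case: ifP => [/andP [/eqP p0 /eqP q0]|_].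
    by move: Qp; rewrite p0 q0 /Q /pd /dotv !big1 ?addr0 ?ltxx // => i _; rewrite mxE mul0r.
  by rewrite QE divfK // gt_eqF.
left; split => //; split.
  by rewrite lamE QE Q0 invr0 mulr0; case: ifP.
move=> x y; have := cs2 p q x y; rewrite Q0 mul0r => H.
by apply/eqP; rewrite -sqrf_eq0 eq_le H sqr_ge0.
Qed.

Lemma lam_ge0 : 0 <= lambda.
Proof.
rewrite lamE; case: ifP => // _; apply: divr_ge0; first by rewrite le_max lexx.
by rewrite addr_ge0 // sqr_ge0.
Qed.

Lemma pdC (x : 'rV[R]_n) (y : 'rV[R]_m) x' y' : pd x y x' y' = pd x' y' x y.
Proof. by rewrite /pd dotvC (dotvC y). Qed.

Lemma F1 : pd a b dx dy = - Q dx dy + lambda * alpha * (r * s).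
Proof.
have e1 : pd a b dx dy + Q dx dy = lambda * (pd p q a b + lambda * Q p q).
  rewrite /dx /dy /Q /pd !(dotvNl, dotvNr, dotvZl, dotvZr, dotvDl, dotvDr).
  rewrite (dotvC p a) (dotvC q b); ring.
have pE : pd p q a b + E = alpha * (r * s) by rewrite /E /pd; ring.
case: lam_cases => [[_ [l0 _]]|[Qp lQ]].
  by move: e1; rewrite l0 !mul0r; lra.
case: (lerP E 0) => E0.
  have l0 : lambda = 0.
    by apply/eqP; move: lQ; rewrite max_l // => /eqP; rewrite mulf_eq0 (gt_eqF Qp) orbF.
  by move: e1; rewrite l0 !mul0r; lra.
move: lQ; rewrite max_r ?ltW // => lQ; rewrite lQ pE in e1; move: e1.
by rewrite mulrA; lra.
Qed.

Lemma r_ge0 : 0 <= r. Proof. exact: sqrtr_ge0. Qed.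
Lemma Cf_ge0 : 0 <= Cf. Proof. exact: le_trans (sqrtr_ge0 _) Cfb. Qed.

Lemma F2 : lambda * r <= Cf + alpha * s.
Proof.
have C0 := Cf_ge0; have as0 : 0 <= alpha * s by rewrite mulr_ge0 // ltW.
case: lam_cases => [[_ [l0 _]]|[Qp lQ]].
  by rewrite l0 mul0r addr_ge0.
have rp : 0 < r by rewrite /r sqrtr_gt0.
have r2 : r ^+ 2 = Q p q by rewrite /r sqr_sqrtr // ltW.
have hc : - pd p q a b <= r * Cf.
  have := cs p q (- a) (- b); rewrite QN -/r.
  have -> : pd p q (- a) (- b) = - pd p q a b by rewrite /pd !dotvNr opprD.
  move=> H; apply: le_trans H _; apply: ler_wpM2l => //; exact: ltW.
have hM : Num.max 0 E <= r * (Cf + alpha * s).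
  rewrite ge_max; apply/andP; split; first by rewrite mulr_ge0 // ?addr_ge0 // ltW.
  by move: hc; rewrite /E /pd; lra.
rewrite -lQ -r2 in hM; nra.
Qed.

Lemma F3 : pd p q dx dy <= 0.
Proof.
have e : pd p q dx dy = - pd p q a b - lambda * Q p q.
  by rewrite /dx /dy /Q /pd !(dotvNr, dotvZr, dotvDr); ring.
case: lam_cases => [[_ [_ H]]|[Qp lQ]]; first by rewrite H.
rewrite e lQ; have : E <= Num.max 0 E by rewrite le_max lexx orbT.
have : 0 <= alpha * (r * s) by rewrite !mulr_ge0 // ?r_ge0 // ltW.
by rewrite /E /pd; lra.
Qed.

Lemma F4 : Num.sqrt (Q dx dy) <= 2 * Cf + alpha * s.
Proof.
have := Qtri (- a) (- b) (- (lambda *: p)) (- (lambda *: q)).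
rewrite QN QN sqrtQZ ger0_norm ?lam_ge0 // -/r -/dx -/dy => H.
have := F2; have := Cfb; lra.
Qed.
End Step.
Section Sums.
Variable R : realType.
Lemma sum_tele (u c : nat -> R) (A : R) :
  (forall k, c k <= u k - u k.+1 + A) ->
  forall K, \sum_(k < K) c k <= u 0%N - u K + K%:R * A.
Proof.
move=> H; elim=> [|K IH]; first by rewrite big_ord0 subrr mul0r addr0.
have e : (K.+1)%:R = K%:R + 1 :> R by rewrite -addn1 natrD.
rewrite big_ord_recr /= e mulrDl mul1r.
have := H K; lra.
Qed.
Lemma sum_grow (u : nat -> R) (c : R) :
  (forall k, u k.+1 <= u k + c) -> forall k, u k <= u 0%N + k%:R * c.
Proof.
move=> H; elim=> [|k IH]; first by rewrite mul0r addr0.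
have e : (k.+1)%:R = k%:R + 1 :> R by rewrite -addn1 natrD.
rewrite e mulrDl mul1r; have := H k; lra.
Qed.
Lemma sum_lin (a c : R) K :
  \sum_(k < K) (a + k%:R * c) = K%:R * a + c * (K%:R * (K%:R - 1) / 2).
Proof.
elim: K => [|K IH]; first by rewrite big_ord0 mul0r mul0r mul0r mulr0 addr0.
rewrite big_ord_recr /= IH -addn1 natrD; field; done.
Qed.
End Sums.
Lemma descent' (R : realType) n m (F : pt R n m -> R) (L : R) (z : pt R n m) u v (g : R) :
  (forall w, differentiable F w) -> grad_lipschitz F L -> 0 <= L -> 0 <= g ->
  F (z.1 + g *: u, z.2 + g *: v) <=
  F z + g * pd (gradx F z) (grady F z) u v + L * g ^+ 2 / 2 * Q u v.
Proof. by case: z => z1 z2; apply: descent. Qed.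
Lemma alg_ineq (R : realType) (al cf sg s : R) : 0 < al -> 0 <= cf -> 0 <= sg -> 0 <= s ->
  s <= al * sg ->
  2 * (al * s * (cf + al * s)) <= al ^+ 2 * ((2 * cf + al ^+ 2 * sg) ^+ 2 + sg ^+ 2).
Proof.
move=> a0 c0 g0 s0 sle.
set u := al * s; set U := al ^+ 2 * sg.
have u0 : 0 <= u by rewrite /u mulr_ge0 // ltW.
have uU : u <= U by rewrite /u /U expr2 -mulrA ler_wpM2l // ltW.
have step : 2 * (u * (cf + u)) <= 2 * (U * (cf + U)) by nra.
apply: le_trans step _; rewrite /U.
set t := al ^+ 2; have t0 : 0 <= t by rewrite sqr_ge0.
suff H : 2 * sg * cf + 2 * t * sg ^+ 2 <= (2 * cf + t * sg) ^+ 2 + sg ^+ 2.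
  have := ler_wpM2l t0 H; apply: le_trans; rewrite le_eqVlt; apply/orP; left; apply/eqP; ring.
case: (lerP 1 (2 * t)) => ht.
  have : 0 <= cf * sg * (2 * t - 1) by rewrite mulr_ge0 ?mulr_ge0 // subr_ge0.
  have := sqr_ge0 (t - 1); have := sqr_ge0 (2 * cf); nra.
have : 0 <= (2 * cf - sg / 2) ^+ 2 by rewrite sqr_ge0.
have : 0 <= cf * sg * t by rewrite mulr_ge0 // mulr_ge0.
have : 0 <= sg ^+ 2 * (1 - 2 * t) by rewrite mulr_ge0 ?sqr_ge0 // subr_ge0 ltW.
have : 0 <= sg ^+ 2 * t ^+ 2 by rewrite mulr_ge0 // sqr_ge0.
nra.
Qed.
Unset Implicit Arguments.
Theorem theorem2 (R : realType) (n m : nat) (f g : pt R n m -> R)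
  (Lf Cf Lh alpha C0 : R) (x0 : 'rV[R]_n) (y0 : 'rV[R]_m) (K : nat) :
  C1 f ->
  has_lbound (range f) ->
  0 < Lf -> grad_lipschitz f Lf ->
  (forall z, gradnorm f z <= Cf) ->
  C2 g ->
  C1 (hfun g) ->
  0 < Lh -> grad_lipschitz (hfun g) Lh ->
  0 < alpha -> 0 < C0 ->
  hfun g (x0, y0) <= alpha ^+ 2 * C0 ->
  (1 <= K)%N ->
  let h := hfun g in
  let rho := fun z => gradnorm h z * Num.sqrt (h (x0, y0)) in
  let gamma := Num.min ((K%:R : R) `^ (- (2 / 3))) (1 / Lf) in
  let z := iter_alg f h rho alpha gamma (x0, y0) in
  let BD := 2 * Cf + alpha ^+ 2 * Num.sqrt C0 in
  (K%:R)^-1 * \sum_(k < K) (enorm (Dx f h rho alpha (z k)) ^+ 2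
                           + enorm (Dy f h rho alpha (z k)) ^+ 2)
    <= 2 * (f (x0, y0) - finf f) / (gamma * K%:R) + alpha ^+ 2 * (BD ^+ 2 + C0)
  /\
  (K%:R)^-1 * \sum_(k < K) h (z k)
    <= alpha ^+ 2 * C0 + gamma ^+ 2 * Lh * BD ^+ 2 / 2 * ((K%:R - 1) / 2).
Proof.
move=> C1f lbf Lf0 LfL Cfb C2g C1h Lh0 LhL al0 C00 h0b K1 h rho gamma z BD.
set s := Num.sqrt (h (x0, y0)).
have s0 : 0 <= s := sqrtr_ge0 _.
set sg := Num.sqrt C0.
have sg0 : 0 <= sg := sqrtr_ge0 _.
have sg2 : sg ^+ 2 = C0 by rewrite sqr_sqrtr // ltW.
have ss : s <= alpha * sg.
  rewrite /s /sg -[alpha](ger0_norm (ltW al0)) -sqrtr_sqr -sqrtrM ?sqr_ge0 //.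
  exact: ler_wsqrtr.
have Kp : 0 < K%:R :> R by rewrite ltr0n.
have gp : 0 < gamma by rewrite /gamma lt_min powR_gt0 // divr_gt0.
have g1 : gamma <= 1 / Lf by rewrite /gamma ge_min lexx orbT.
have gL : gamma * Lf <= 1.
  have H := ler_wpM2r (ltW Lf0) g1; by rewrite mul1r mulVf ?gt_eqF // in H.
have dfall : forall w, differentiable f w := C1f.1.
have dhall : forall w, differentiable h w := C1h.1.
set Qk := fun k => Q (Dx f h rho alpha (z k)) (Dy f h rho alpha (z k)).
have Qk0 : forall k, 0 <= Qk k by move=> k; exact: Q_ge0.
set lm := fun k => lam f h rho alpha (z k).
have lamE : forall k, lm k = if (gradx h (z k) == 0) && (grady h (z k) == 0) then 0
  else Num.max 0 (- dotv (gradx h (z k)) (gradx f (z k)) - dotv (grady h (z k)) (grady f (z k))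
     + alpha * (Num.sqrt (Q (gradx h (z k)) (grady h (z k))) * s))
     / (enorm (gradx h (z k)) ^+ 2 + enorm (grady h (z k)) ^+ 2).
  by move=> k; rewrite /lm /lam /rho /gradnorm pnormE.
have Cfw : forall k, Num.sqrt (Q (gradx f (z k)) (grady f (z k))) <= Cf.
  by move=> k; rewrite -pnormE; exact: Cfb.
set A := alpha * s * (Cf + alpha * s).
have stepf : forall k, gamma / 2 * Qk k <= f (z k) - f (z k.+1) + gamma * A.
  move=> k.
  have ez : z k.+1 = ((z k).1 + gamma *: Dx f h rho alpha (z k),
                      (z k).2 + gamma *: Dy f h rho alpha (z k)) by [].
  rewrite ez.
  have D := descent' (z k) (Dx f h rho alpha (z k)) (Dy f h rho alpha (z k))
              dfall LfL (ltW Lf0) (ltW gp).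
  have e1 : pd (gradx f (z k)) (grady f (z k)) (Dx f h rho alpha (z k)) (Dy f h rho alpha (z k))
     = - Qk k + lm k * alpha * (Num.sqrt (Q (gradx h (z k)) (grady h (z k))) * s)
     := F1 (lamE k).
  have e2 : lm k * Num.sqrt (Q (gradx h (z k)) (grady h (z k))) <= Cf + alpha * s
     := F2 al0 s0 (Cfw k) (lamE k).
  have t1 : Lf * gamma ^+ 2 / 2 * Qk k <= gamma / 2 * Qk k.
    have h1 : 0 <= 1 - gamma * Lf by rewrite subr_ge0; exact: gL.
    have := mulr_ge0 h1 (mulr_ge0 (ltW gp) (Qk0 k)); rewrite expr2; lra.
  have t2 : gamma * (lm k * alpha * (Num.sqrt (Q (gradx h (z k)) (grady h (z k))) * s))
      <= gamma * A.
    apply: ler_wpM2l; first exact: ltW.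
    have -> : lm k * alpha * (Num.sqrt (Q (gradx h (z k)) (grady h (z k))) * s) =
      alpha * s * (lm k * Num.sqrt (Q (gradx h (z k)) (grady h (z k)))) by ring.
    by rewrite /A ler_wpM2l // mulr_ge0 // ltW.
  rewrite e1 mulrDr -/(Qk k) in D; lra.
set c := gamma ^+ 2 * Lh * BD ^+ 2 / 2.
have Cf0 : 0 <= Cf.
  by have := Cfb (x0, y0); apply: le_trans; rewrite /gradnorm /pnorm sqrtr_ge0.
have BD0 : 0 <= BD.
  by apply: addr_ge0; [exact: mulr_ge0 | exact: mulr_ge0 (sqr_ge0 _) (sqrtr_ge0 _)].
have steph : forall k, h (z k.+1) <= h (z k) + c.
  move=> k.
  have ez : z k.+1 = ((z k).1 + gamma *: Dx f h rho alpha (z k),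
                      (z k).2 + gamma *: Dy f h rho alpha (z k)) by [].
  rewrite ez.
  have D := descent' (z k) (Dx f h rho alpha (z k)) (Dy f h rho alpha (z k))
              dhall LhL (ltW Lh0) (ltW gp).
  have e3 : pd (gradx h (z k)) (grady h (z k)) (Dx f h rho alpha (z k)) (Dy f h rho alpha (z k))
     <= 0 := F3 al0 s0 (lamE k).
  have e4 : Num.sqrt (Qk k) <= 2 * Cf + alpha * s := F4 al0 s0 (Cfw k) (lamE k).
  have e5 : Qk k <= BD ^+ 2.
    have e4' : Num.sqrt (Qk k) <= BD.
      by have := ler_wpM2l (ltW al0) ss; rewrite /BD -/sg expr2 -mulrA; lra.
    have := sqr_sqrtr (Qk0 k); have := sqrtr_ge0 (Qk k); nra.
  have t1 : gamma * pd (gradx h (z k)) (grady h (z k)) (Dx f h rho alpha (z k))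
     (Dy f h rho alpha (z k)) <= 0 by exact: mulr_ge0_le0 (ltW gp) e3.
  have t2 : Lh * gamma ^+ 2 / 2 * Qk k <= c.
    rewrite /c; have -> : gamma ^+ 2 * Lh * BD ^+ 2 / 2 = Lh * gamma ^+ 2 / 2 * BD ^+ 2 by ring.
    apply: ler_wpM2l => //; rewrite mulr_ge0 ?mulr_ge0 ?sqr_ge0 ?ltW //.
  rewrite -/(Qk k) in D; lra.
split.
  have Hs := @sum_tele R (fun k => f (z k)) (fun k => gamma / 2 * Qk k) (gamma * A) stepf K.
  rewrite -mulr_sumr /= in Hs.
  have fK : finf f <= f (z K) by apply: (ge_inf lbf); exists (z K).
  have eS : \sum_(k < K) (enorm (Dx f h rho alpha (z k)) ^+ 2
                           + enorm (Dy f h rho alpha (z k)) ^+ 2) = \sum_(k < K) Qk k.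
    by apply: eq_bigr => k _; rewrite !sqr_enorm.
  rewrite eS; set S := \sum_(k < K) Qk k in Hs *.
  have H2A : 2 * A <= alpha ^+ 2 * (BD ^+ 2 + C0).
    by rewrite -sg2 /BD /A; apply: alg_ineq.
  have e : K%:R^-1 * S = (2 / (gamma * K%:R)) * (gamma / 2 * S).
    by field; rewrite gt_eqF // gt_eqF.
  have ez0 : z 0%N = (x0, y0) by [].
  rewrite ez0 in Hs.
  have H1 : gamma / 2 * S <= f (x0, y0) - finf f + K%:R * (gamma * A) by lra.
  have c0 : 0 <= 2 / (gamma * K%:R) by rewrite divr_ge0 // mulr_ge0 // ltW.
  have H3 := ler_wpM2l c0 H1.
  have e2 : 2 / (gamma * K%:R) * (f (x0, y0) - finf f + K%:R * (gamma * A)) =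
     2 * (f (x0, y0) - finf f) / (gamma * K%:R) + 2 * A.
    by field; rewrite gt_eqF // gt_eqF.
  rewrite e e2 in H3 *; lra.
have Hg := @sum_grow R (fun k => h (z k)) c steph.
have Hsum : \sum_(k < K) h (z k) <= \sum_(k < K) (h (z 0%N) + k%:R * c).
  by apply: ler_sum => k _; exact: Hg.
rewrite sum_lin in Hsum.
have ez0 : z 0%N = (x0, y0) by [].
rewrite ez0 in Hsum.
have Ki : 0 <= K%:R^-1 :> R by rewrite invr_ge0 ltW.
have H3 := ler_wpM2l Ki Hsum.
have e : K%:R^-1 * (K%:R * h (x0, y0) + c * (K%:R * (K%:R - 1) / 2)) =
   h (x0, y0) + c * ((K%:R - 1) / 2).
  by field; rewrite gt_eqF.
rewrite e in H3; have : h (x0, y0) <= alpha ^+ 2 * C0 := h0b.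
lra.
Qed.
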